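(* Assume there is a linear operator $\mathfrak{R}:V\to W'$ and constants $\alpha_*>0$, $M^*>0$ with $$\inf_{w\in W,\,w\ne0}\ \sup_{v\in V,\,v\neq0}\frac{\langle\mathfrak{R}v,w\rangle}{\|w\|_W\|v\|_V}\ge\alpha_*,\qquad\|\mathfrak{R}v\|_{W'}\le M^*\|v\|_V\ \ \forall v\in V,$$ and that there is $\kappa>0$ with $$\kappa\|w\|_W\le\sup_{v_\eta\in V_\eta,\ v_\eta\neq0}\frac{\mathcal{A}(w,v_\eta)}{\|v_\eta\|_V}\quad\text{for all } w\in W_\theta\cup S_\theta.$$ Let $u^*_\theta\in\mathrm{cl}^{seq}_w(W_\theta)$ be the weak limit in $W$ of a minimizing sequence $(\tilde w^n_\theta)\subset W_\theta$, i.e. $\lim_n\|u-\tilde w^n_\theta\|_{op,\eta}=\inf_{w_\theta\in W_\theta}\|u-w_\theta\|_{op,\eta}$. Then $$\|u-u^*_\theta\|_W\le\Big(1+2\frac{M^*}{\alpha_*}\frac{M}{\kappa}\Big)\inf_{w_\theta\in W_\theta}\|u-w_\theta\|_W.$$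
   Context: $W$ and $V$ are reflexive separable real Banach spaces, $W'$ the dual of $W$ with duality pairing $\langle\cdot,\cdot\rangle$. $\mathcal{A}:W\times V\to\mathbb{R}$ is a bilinear form with $\mathcal{A}(w,v)\le M\|w\|_W\|v\|_V$, $\mathcal{F}:V\to\mathbb{R}$ is bounded linear, and $u\in W$ is the unique solution of $\mathcal{A}(u,v)=\mathcal{F}(v)$ for all $v\in V$. $W_\theta\subseteq W$ and $V_\eta\subseteq V$ are arbitrary subsets, $V_\eta$ containing an element of nonzero norm. For $w\in W$, $\|w\|_{op,\eta}:=\sup_{v_\eta\in V_\eta,\ \|v_\eta\|_V\neq0}\mathcal{A}(w,v_\eta)/\|v_\eta\|_V$. $S_\theta:=\{w_1-w_2:\ w_1,w_2\in W_\theta\}$. $\mathrm{cl}^{seq}_w(W_\theta)$ is the set of all weak limits in $W$ of sequences in $W_\theta$. *)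

(* Defs.v *)
From HB Require Import structures.
From mathcomp Require Import all_boot all_order all_algebra.
From mathcomp Require Import all_classical all_reals all_analysis.
Set Implicit Arguments. Unset Strict Implicit. Unset Printing Implicit Defensive.
Import Order.TTheory GRing.Theory Num.Theory.
Import numFieldNormedType.Exports.
Local Open Scope classical_set_scope.
Local Open Scope ring_scope.

Definition is_dual_elt (R : realType) (W : normedModType R) (f : W -> R) : Prop :=
  (forall (a : R) (x y : W), f (a *: x + y) = a * f x + f y) /\ continuous f.

(* a bounded linear functional on W' (element of the bidual W'') ;
   boundedness w.r.t. the dual norm ||f||_{W'} = sup |f w| / ||w||. *)
Definition is_bidual_elt (R : realType) (W : normedModType R)
  (Phi : (W -> R) -> R) : Prop :=
  (forall (a : R) (f g : W -> R), is_dual_elt f -> is_dual_elt g ->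
      Phi (fun x => a * f x + g x) = a * Phi f + Phi g) /\
  (exists C : R, forall (f : W -> R) (K : R), is_dual_elt f ->
      (forall w : W, `|f w| <= K * `|w|) -> `|Phi f| <= C * K).

Definition reflexive_space (R : realType) (W : normedModType R) : Prop :=
  forall Phi : (W -> R) -> R, is_bidual_elt Phi ->
    exists w : W, forall f : W -> R, is_dual_elt f -> Phi f = f w.

Definition separable_space (R : realType) (W : normedModType R) : Prop :=
  exists D : set W, countable D /\ closure D = setT.

Definition weak_cvg (R : realType) (W : normedModType R) (s : nat -> W) (l : W) : Prop :=
  forall f : W -> R, is_dual_elt f -> (fun n => f (s n)) @ \oo --> f l.

Definition seq_weak_closure (R : realType) (W : normedModType R) (Wt : set W) : set W :=
  [set l | exists s : nat -> W, (forall n, Wt (s n)) /\ weak_cvg s l].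

Definition diff_set (R : realType) (W : normedModType R) (Wt : set W) : set W :=
  [set w | exists w1 w2, Wt w1 /\ Wt w2 /\ w = w1 - w2].

Definition opnorm_eta (R : realType) (W V : normedModType R)
  (A : W -> V -> R) (Veta : set V) (w : W) : \bar R :=
  ereal_sup [set (A w v / `|v|)%:E | v in [set v | Veta v /\ `|v| != 0]].

(* Main.v *)
Require Import Defs.
From mathcomp Require Import ring lra.
From HB Require Import structures.
From mathcomp Require Import all_boot all_order all_algebra.
From mathcomp Require Import all_classical all_reals all_analysis.
Import Order.TTheory GRing.Theory Num.Theory.
Import numFieldNormedType.Exports.
Local Open Scope classical_set_scope.
Local Open Scope ring_scope.
Lemma lin_bdd_cont (R : realType) (W : normedModType R) (f : W -> R) (K : R) :
  (forall (a : R) (x y : W), f (a *: x + y) = a * f x + f y) ->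
  (forall x, `|f x| <= K * `|x|) -> continuous f.
Proof.
move=> hl hb x; apply/cvgrPdist_le => e e0.
have K1 : 0 < `|K| + 1 by rewrite ltr_wpDl.
have hd : 0 < e / (`|K| + 1) by rewrite divr_gt0.
near=> y.
have -> : f x - f y = f (x - y).
  have -> : x - y = (-1) *: y + x by rewrite scaleN1r addrC.
  by rewrite hl mulN1r addrC.
apply: (le_trans (hb _)).
have hxy : `|x - y| <= e / (`|K| + 1).
  near: y. exact: (@cvgr_dist_le _ _ _ (nbhs x) _ id x cvg_id).
apply: (le_trans (ler_wpM2r (normr_ge0 _) (ler_norm K))).
apply: (@le_trans _ _ ((`|K| + 1) * `|x - y|)).
  by rewrite ler_wpM2r // lerDl.
by rewrite mulrC -ler_pdivlMr.
Unshelve. all: by end_near. Qed.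

Theorem lemma3 (R : realType) (W V : completeNormedModType R)
  (hWrefl : reflexive_space W) (hVrefl : reflexive_space V)
  (hWsep : separable_space W) (hVsep : separable_space V)
  (A : W -> V -> R) (M : R)
  (hAl : forall (a : R) (w1 w2 : W) (v : V), A (a *: w1 + w2) v = a * A w1 v + A w2 v)
  (hAr : forall (a : R) (w : W) (v1 v2 : V), A w (a *: v1 + v2) = a * A w v1 + A w v2)
  (hAb : forall (w : W) (v : V), A w v <= M * `|w| * `|v|)
  (F : V -> R)
  (hFl : forall (a : R) (v1 v2 : V), F (a *: v1 + v2) = a * F v1 + F v2)
  (hFb : exists C : R, forall v : V, `|F v| <= C * `|v|)
  (u : W) (hu : forall v : V, A u v = F v)
  (hu_uniq : forall w : W, (forall v : V, A w v = F v) -> w = u)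
  (Wtheta : set W) (Veta : set V)
  (hVeta : exists v : V, Veta v /\ `|v| != 0)
  (* the operator frakR : V -> W', given through its pairing <frakR v, w> = r v w *)
  (r : V -> W -> R)
  (hrl : forall (a : R) (v1 v2 : V) (w : W), r (a *: v1 + v2) w = a * r v1 w + r v2 w)
  (hrr : forall (a : R) (v : V) (w1 w2 : W), r v (a *: w1 + w2) = a * r v w1 + r v w2)
  (alpha Mstar kappa : R) (halpha : 0 < alpha) (hMstar : 0 < Mstar) (hkappa : 0 < kappa)
  (hinfsup : (alpha%:E <= ereal_inf
       [set ereal_sup [set (r v w / (`|w| * `|v|))%:E | v in [set v : V | v != 0%R]]
        | w in [set w : W | w != 0%R]])%E)
  (hrbound : forall (v : V) (w : W), `|r v w| <= Mstar * `|v| * `|w|)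
  (hkap : forall w : W, (Wtheta w \/ diff_set Wtheta w) ->
       ((kappa * `|w|)%:E <= opnorm_eta A Veta w)%E)
  (wn : nat -> W) (hwn : forall n, Wtheta (wn n))
  (hmin : (fun n => opnorm_eta A Veta (u - wn n)) @ \oo -->
          ereal_inf [set opnorm_eta A Veta (u - w) | w in Wtheta])
  (ustar : W) (hustar : weak_cvg wn ustar) :
  ((`|u - ustar|)%:E <=
     (1 + 2 * (Mstar / alpha) * (M / kappa))%:E *
     ereal_inf [set (`|u - w|)%:E | w in Wtheta])%E.
Proof.
have A0 : forall w, A w 0 = 0.
  move=> w; have := hAr 1 w 0 0; rewrite scale1r addr0 mul1r => h.
  lra.
have AN : forall w v, A w (- v) = - A w v.
  by move=> w v; have := hAr (-1) w v 0; rewrite scaleN1r addr0 A0 addr0 mulN1r.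
have AD : forall x y v, A (x + y) v = A x v + A y v.
  by move=> x y v; have := hAl 1 x y v; rewrite scale1r mul1r.
have rB : forall v x y, r v (x - y) = r v x - r v y.
  move=> v x y; have := hrr (-1) v y x; rewrite scaleN1r mulN1r addrC => ->.
  by rewrite addrC.
have [v0 [Vv0 nv0]] := hVeta.
have v0p : 0 < `|v0| by rewrite lt0r nv0 normr_ge0.
have hw0 : M < 0 -> forall w : W, w = 0.
  move=> hM w; have h1 := hAb w v0; have h2 := hAb w (- v0).
  rewrite AN normrN in h2.
  have h3 : 0 <= M * `|w| * `|v0| by lra.
  rewrite -mulrA nmulr_rge0 // mulrC pmulr_rle0 // normr_le0 in h3.
  exact/eqP.
have [hM|hM] := leP 0 M; last first.
  have e0 : u - ustar = 0 by rewrite (hw0 hM (u - ustar)).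
  have hI : ereal_inf [set (`|u - w|)%:E | w in Wtheta] = 0%E.
    apply/eqP; rewrite eq_le; apply/andP; split.
      apply: ge_ereal_inf; exists (`|u - wn 0|)%:E; first by exists (wn 0%N).
      by rewrite (hw0 hM (u - wn 0%N)) normr0.
    by apply: le_ereal_inf_tmp => _ [w _ <-]; rewrite lee_fin normr_ge0.
  by rewrite e0 normr0 hI mule0.
have key : forall w, Wtheta w ->
    `|u - ustar| <= (1 + 2 * (Mstar / alpha) * (M / kappa)) * `|u - w|.
  move=> w Ww.
  have hop : forall x, (opnorm_eta A Veta x <= (M * `|x|)%:E)%E.
    move=> x; apply: ge_ereal_sup => _ [v [Vv nv] <-].
    have vp : 0 < `|v| by rewrite lt0r nv normr_ge0.
    by rewrite lee_fin ler_pdivrMr.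
  have hc0 : (ereal_inf [set opnorm_eta A Veta (u - w')%R | w' in Wtheta]
               <= (M * `|u - w|)%:E)%E.
    apply: ge_ereal_inf; exists (opnorm_eta A Veta (u - w)%R); [by exists w | exact: hop].
  have hsub : forall n, (opnorm_eta A Veta (w - wn n)%R <=
        opnorm_eta A Veta (u - wn n)%R + (M * `|u - w|)%:E)%E.
    move=> n; apply: ge_ereal_sup => _ [v [Vv nv] <-].
    have vp : 0 < `|v| by rewrite lt0r nv normr_ge0.
    have -> : w - wn n = (u - wn n) + (w - u).
      by rewrite [in RHS]addrC [in RHS]addrA [in RHS]subrK.
    rewrite AD mulrDl EFinD; apply: leeD.
      by apply: ereal_sup_ubound; exists v.
    by rewrite lee_fin ler_pdivrMr // distrC; exact: hAb.
  have hkn : forall n, ((kappa * `|w - wn n|)%:E <=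
        opnorm_eta A Veta (u - wn n)%R + (M * `|u - w|)%:E)%E.
    move=> n; apply: le_trans (hsub n); apply: hkap; right; by exists w, (wn n).
  have hnear : forall e, 0 < e -> \forall n \near \oo,
        kappa * `|w - wn n| <= 2 * M * `|u - w| + e.
    move=> e e0.
    have hlt : (ereal_inf [set opnorm_eta A Veta (u - w')%R | w' in Wtheta]
               < (M * `|u - w| + e)%:E)%E.
      by apply: (le_lt_trans hc0); rewrite lte_fin ltrDl.
    have hev : \forall n \near \oo,
        (opnorm_eta A Veta (u - wn n)%R < (M * `|u - w| + e)%:E)%E.
      exact: (hmin (fun x => (x < (M * `|u - w| + e)%:E)%E) (open_ereal_lt' hlt)).
    apply: filterS hev => n hn.
    have := le_trans (hkn n) (leeD (ltW hn) (lexx _)).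
    rewrite -EFinD lee_fin; lra.
  have hr : forall e, 0 < e -> forall v : V, v != 0 ->
      r v (w - ustar) <= Mstar * `|v| * ((2 * M * `|u - w| + e) / kappa).
    move=> e e0 v nv.
    have hd : is_dual_elt (r v).
      split; first by move=> a x y; exact: hrr.
      apply: (@lin_bdd_cont _ _ _ (Mstar * `|v|)).
        by move=> a x y; exact: hrr.
      by move=> x; exact: hrbound.
    have hc := hustar _ hd.
    have hs : (fun n => r v (w - wn n)) @ \oo --> r v (w - ustar).
      have -> : (fun n => r v (w - wn n)) = (fun n => r v w - r v (wn n)).
        by apply: funext => n; rewrite rB.
      rewrite rB; apply: cvgB; [exact: cvg_cst | exact: hc].
    apply: (cvgr_to_le hs).
    apply: filterS (hnear e e0) => n hn.
    apply: (le_trans (ler_norm _)); apply: (le_trans (hrbound _ _)).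
    rewrite ler_wpM2l ?mulr_ge0 ?(ltW hMstar) //.
    by rewrite ler_pdivlMr // mulrC.
  have hb : forall e, 0 < e ->
      `|w - ustar| <= Mstar * ((2 * M * `|u - w| + e) / kappa) / alpha.
    move=> e e0.
    have X0 : 0 <= (2 * M * `|u - w| + e) / kappa.
      apply: divr_ge0; last exact: ltW hkappa.
      by apply: addr_ge0; [rewrite !mulr_ge0 | exact: ltW e0].
    have [z0|nz] := eqVneq (w - ustar) 0.
      rewrite z0 normr0; apply: divr_ge0; last exact: ltW halpha.
      by apply: mulr_ge0 => //; exact: ltW hMstar.
    have np : 0 < `|w - ustar| by rewrite normr_gt0.
    set B := Mstar * ((2 * M * `|u - w| + e) / kappa).
    have : (alpha%:E <= (B / `|w - ustar|)%:E)%E.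
      apply: (le_trans hinfsup); apply: ge_ereal_inf.
      exists (ereal_sup [set (r v (w - ustar) / (`|w - ustar| * `|v|))%:E
                         | v in [set v : V | v != 0]]); first by exists (w - ustar).
      apply: ge_ereal_sup => _ [v nv <-].
      have vp : 0 < `|v| by rewrite normr_gt0.
      rewrite lee_fin ler_pdivrMr ?mulr_gt0 //.
      have -> : B / `|w - ustar| * (`|w - ustar| * `|v|) =
                Mstar * `|v| * ((2 * M * `|u - w| + e) / kappa).
        by rewrite /B; field; rewrite !gt_eqF.
      exact: hr.
    rewrite lee_fin ler_pdivlMr // => h.
    by rewrite ler_pdivlMr // mulrC.
  have K0 : `|w - ustar| <= Mstar * ((2 * M * `|u - w|) / kappa) / alpha.
    apply/ler_addgt0Pr => e e0.
    have e1 : 0 < e * kappa * alpha / Mstar by apply: divr_gt0 => //; rewrite !mulr_gt0.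
    apply: (le_trans (hb _ e1)); rewrite le_eqVlt; apply/orP; left; apply/eqP.
    by field; rewrite !gt_eqF.
  have hT : `|u - ustar| <= `|u - w| + `|w - ustar|.
    have -> : u - ustar = (u - w) + (w - ustar) by rewrite addrA subrK.
    exact: ler_normD.
  apply: (le_trans hT).
  have -> : (1 + 2 * (Mstar / alpha) * (M / kappa)) * `|u - w| =
            `|u - w| + Mstar * ((2 * M * `|u - w|) / kappa) / alpha.
    by field; rewrite !gt_eqF.
  by rewrite lerD2l.
set c := 1 + 2 * (Mstar / alpha) * (M / kappa).
have cp : 0 < c.
  rewrite /c ltr_wpDr //; apply: mulr_ge0; first by rewrite mulr_ge0 ?divr_ge0 ?(ltW halpha) ?(ltW hMstar).
  by rewrite divr_ge0 ?(ltW hkappa).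
have hI : ((`|u - ustar| / c)%:E <= ereal_inf [set (`|u - w|)%:E | w in Wtheta])%E.
  apply: le_ereal_inf_tmp => _ [w Ww <-].
  by rewrite lee_fin ler_pdivrMr // mulrC; exact: key.
have := lee_wpmul2l (x := c%:E) _ hI.
rewrite -EFinM mulrC divfK ?gt_eqF //; apply.
by rewrite lee_fin ltW.
Qed.
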